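(* Let $H$ be a transitive subgroup of $\operatorname{Sym}_n$ and let $S=S_n(H)$. Then $\bigcup_{i=1}^n Sa_i^2S$ is not a prime ideal of $S$.
   Context: $S_n(H)$ is the monoid with presentation $\langle a_1,\dots,a_n \mid a_1\cdots a_n = a_{\sigma(1)}\cdots a_{\sigma(n)},\ \sigma\in H\rangle$. An ideal $Q$ of a monoid $S$ is prime if $Q\neq S$ and, for $u,v\in S$, $uSv\subseteq Q$ implies $u\in Q$ or $v\in Q$. *)

(* Defs.v *)
From mathcomp Require Import all_boot all_fingroup.
Set Implicit Arguments. Unset Strict Implicit. Unset Printing Implicit Defensive.

(* Elements of the free monoid on generators a_1..a_n are words : seq 'I_n;
   concatenation is the product.  S_n(H) is the quotient of the free monoid
   by the congruence [Scong H] generated by the defining relations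
   a_1 ... a_n = a_{s(1)} ... a_{s(n)},  s in H. *)

Definition id_word (n : nat) : seq 'I_n := enum 'I_n.
Definition perm_word (n : nat) (s : {perm 'I_n}) : seq 'I_n :=
  map s (enum 'I_n).

Inductive Scong (n : nat) (H : {set {perm 'I_n}}) : seq 'I_n -> seq 'I_n -> Prop :=
  | Scong_rel : forall (s : {perm 'I_n}) (x y : seq 'I_n), s \in H ->
      Scong H (x ++ id_word n ++ y) (x ++ perm_word s ++ y)
  | Scong_refl : forall u, Scong H u u
  | Scong_sym : forall u v, Scong H u v -> Scong H v u
  | Scong_trans : forall u v w, Scong H u v -> Scong H v w -> Scong H u w.

(* The ideal  \bigcup_i S a_i^2 S  of S_n(H), as a (congruence-saturated)
   predicate on words: w lies in it iff its class equals s a_i a_i t. *)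
Definition sq_ideal (n : nat) (H : {set {perm 'I_n}}) (w : seq 'I_n) : Prop :=
  exists (x y : seq 'I_n) (i : 'I_n), Scong H w (x ++ [:: i; i] ++ y).

Definition prime_ideal (n : nat) (H : {set {perm 'I_n}})
    (Q : seq 'I_n -> Prop) : Prop :=
  (forall u v, Scong H u v -> Q u -> Q v) /\
  (forall u x y, Q u -> Q (x ++ u ++ y)) /\
  (exists w, ~ Q w) /\
  (forall u v, (forall s, Q (u ++ s ++ v)) -> Q u \/ Q v).

(* Main.v *)
Require Import Defs.
From mathcomp Require Import all_boot all_fingroup.

Lemma uniq_cat3 (T : eqType) (x l y : seq T) :
  uniq (x ++ l ++ y) -> (forall a, a \in l) -> x = [::] /\ y = [::].
Proof.
move=> U A; split.
  case: x U => [//|a x]; rewrite cat_uniq => /andP[_ /andP[/hasPn H _]].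
  by move: (H a); rewrite mem_cat A inE eqxx => /(_ isT).
case: y U => [//|a y]; rewrite !cat_uniq => /andP[_ /andP[_ /andP[_ /andP[/hasPn H _]]]].
by move: (H a); rewrite inE eqxx => /(_ isT); rewrite (A a).
Qed.

Lemma perm_word_all n (s : {perm 'I_n}) a : a \in perm_word s.
Proof.
rewrite /perm_word; apply/mapP; exists (s^-1 a)%g; first by rewrite mem_enum.
by rewrite permKV.
Qed.

Lemma id_word_all n a : a \in id_word n.
Proof. by rewrite mem_enum. Qed.

Lemma uniq_perm_word n (s : {perm 'I_n}) : uniq (perm_word s).
Proof. by rewrite map_inj_uniq ?enum_uniq //; apply: perm_inj. Qed.

Lemma Scong_uniq n (H : {set {perm 'I_n}}) u v :
  Scong H u v -> uniq u = uniq v.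
Proof.
elim=> //.
- move=> s x y _; apply/idP/idP => U.
    have [Ex Ey] := @uniq_cat3 _ _ _ _ U (@id_word_all n).
    by rewrite Ex Ey cats0 uniq_perm_word.
  have [Ex Ey] := @uniq_cat3 _ _ _ _ U (@perm_word_all n s).
  by rewrite Ex Ey cats0 enum_uniq.
- by move=> u0 v0 w0 _ E1 _ E2; rewrite E1 E2.
Qed.

Theorem lemma4p4 (n : nat) (H : {group {perm 'I_n}}) :
  [transitive H, on [set: 'I_n] | 'P] ->
  ~ prime_ideal H (sq_ideal H).
Proof.
move=> Htr [_ [_ [_ Hp]]].
case: n H Htr Hp => [|m] H Htr Hp.
  by move: Htr; rewrite /atrans => /imsetP[[x Hx]].
have Qw : sq_ideal H (id_word m.+1).
  have := Hp (id_word m.+1) (id_word m.+1); case=> [s|//|//].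
  have ne : id_word m.+1 ++ s != [::] by rewrite /id_word enum_ordSl.
  have [p [j E]] : exists p j, id_word m.+1 ++ s = rcons p j.
    move: ne; case/lastP: (id_word m.+1 ++ s) => [//|p j] _; by exists p, j.
  have [a aH ja] := atransP2 Htr (in_setT ord0) (in_setT j).
  exists p, (behead (perm_word a)), j.
  have R := Scong_rel (id_word m.+1 ++ s) [::] aH.
  rewrite !cats0 in R.
  rewrite catA; apply: Scong_trans R _.
  rewrite E.
  have -> : perm_word a = j :: behead (perm_word a).
    by rewrite /perm_word enum_ordSl /= ja.
  by rewrite -cats1 -catA /=; apply: Scong_refl.
case: Qw => x [y [i C]].
have := @Scong_uniq _ _ _ _ C; rewrite /id_word enum_uniq => /esym.
by rewrite !cat_uniq /= inE eqxx /= !andbF.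
Qed.
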